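(* Let $B\ge1$, $C\ge1$ and $\theta,\tilde\theta\in[-B,B]^P$. Then for all $\mathbf{x}\in\mathbb{R}^p$, \[ |f_\theta(\mathbf{x})-f_{\tilde\theta}(\mathbf{x})|\le 4(2rB)^L(|\mathbf{x}|_1\vee1)\,|\theta-\tilde\theta|_\infty. \]
   Context: ReLU $\sigma(x)=\max(x,0)$ coordinatewise. For $L,r\in\mathbb{N}$, $g_\theta(\mathbf{x})=W^{(L+1)}\mathbf{x}^{(L)}+v^{(L+1)}$ with $\mathbf{x}^{(0)}=\mathbf{x}\in\mathbb{R}^p$, $\mathbf{x}^{(l)}=\sigma(W^{(l)}\mathbf{x}^{(l-1)}+v^{(l)})$ for $l=1,\dots,L$, where $W^{(1)}\in\mathbb{R}^{r\times p}$, $W^{(2)},\dots,W^{(L)}\in\mathbb{R}^{r\times r}$, $W^{(L+1)}\in\mathbb{R}^{1\times r}$, $v^{(1)},\dots,v^{(L)}\in\mathbb{R}^r$, $v^{(L+1)}\in\mathbb{R}$, all entries collected in $\theta\in\mathbb{R}^P$, $P=(p+1)r+(L-1)(r+1)r+r+1$. Clipped network $f_\theta=(-C)\vee(g_\theta\wedge C)$. $|\cdot|_1,|\cdot|_\infty$ are the $\ell^1$ and $\ell^\infty$ norms. *)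

(* Defs.v *)
From HB Require Import structures.
From mathcomp Require Import all_boot all_order all_algebra.
From mathcomp Require Import reals.
Set Implicit Arguments. Unset Strict Implicit. Unset Printing Implicit Defensive.
Import Order.TTheory GRing.Theory Num.Theory.
Local Open Scope ring_scope.

(* The parameter vector theta of a ReLU network of depth L and width r on R^p.
   W_in = W^(1), v_in = v^(1); W_hid k = W^(k+2), v_hid k = v^(k+2) for
   k = 0..L-2; W_out = W^(L+1), v_out = v^(L+1).  Its entries are exactly the
   P = (p+1)r + (L-1)(r+1)r + r + 1 coordinates of theta. *)
Record nnparam (R : pzRingType) (p r L : nat) := NNParam {
  W_in  : 'M[R]_(r, p);
  v_in  : 'cV[R]_r;
  W_hid : 'I_L.-1 -> 'M[R]_r;
  v_hid : 'I_L.-1 -> 'cV[R]_r;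
  W_out : 'rV[R]_r;
  v_out : R }.

Section NN.
Variable R : realType.

Definition relu_v (n : nat) (v : 'cV[R]_n) : 'cV[R]_n :=
  map_mx (fun a => Num.max a 0) v.

Definition net_g (p r L : nat) (th : nnparam R p r L) (x : 'cV[R]_p) : R :=
  let h1 := relu_v (W_in th *m x + v_in th) in
  let hL := foldl (fun h k => relu_v (W_hid th k *m h + v_hid th k)) h1
                  (enum 'I_L.-1) in
  (W_out th *m hL) 0 0 + v_out th.

Definition net_f (p r L : nat) (C : R) (th : nnparam R p r L) (x : 'cV[R]_p) : R :=
  Num.max (- C) (Num.min (net_g th x) C).

Definition norm1 (p : nat) (x : 'cV[R]_p) : R := \sum_(i < p) `|x i 0|.

Definition mxsup (m n : nat) (A : 'M[R]_(m, n)) : R :=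
  \big[Num.max/0]_(i < m) \big[Num.max/0]_(j < n) `|A i j|.

Definition param_sup (p r L : nat) (th : nnparam R p r L) : R :=
  Num.max (mxsup (W_in th))
 (Num.max (mxsup (v_in th))
 (Num.max (\big[Num.max/0]_(k < L.-1) mxsup (W_hid th k))
 (Num.max (\big[Num.max/0]_(k < L.-1) mxsup (v_hid th k))
 (Num.max (mxsup (W_out th)) `|v_out th|)))).

Definition param_sub (p r L : nat) (th th' : nnparam R p r L) : nnparam R p r L :=
  NNParam (W_in th - W_in th') (v_in th - v_in th')
          (fun k => W_hid th k - W_hid th' k) (fun k => v_hid th k - v_hid th' k)
          (W_out th - W_out th') (v_out th - v_out th').

Definition in_box (p r L : nat) (B : R) (th : nnparam R p r L) : Prop :=
  (forall i j, - B <= W_in th i j <= B) /\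
  (forall i j, - B <= v_in th i j <= B) /\
  (forall k i j, - B <= W_hid th k i j <= B) /\
  (forall k i j, - B <= v_hid th k i j <= B) /\
  (forall i j, - B <= W_out th i j <= B) /\
  - B <= v_out th <= B.

End NN.

(* Main.v *)
Require Import Defs.
From HB Require Import structures.
From mathcomp Require Import all_boot all_order all_algebra.
From mathcomp Require Import reals.
From mathcomp Require Import ring lra.
Import Order.TTheory GRing.Theory Num.Theory.
Local Open Scope ring_scope.

Lemma addE (R : realType) m n (A B : 'M[R]_(m,n)) i j : (A + B) i j = A i j + B i j.
Proof. by rewrite mxE. Qed.
Lemma subE (R : realType) m n (A B : 'M[R]_(m,n)) i j : (A - B) i j = A i j - B i j.
Proof. by rewrite !mxE. Qed.

Lemma maxlip (R : realType) (c a b : R) : `|Num.max c a - Num.max c b| <= `|a - b|.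
Proof.
have [ha|ha] := leP c a; have [hb|hb] := leP c b; rewrite ler_norml;
  rewrite ?ler_norml in ha hb *; move: (ler_norm (a - b)) (ler_norm (b - a));
  rewrite distrC; lra.
Qed.

Lemma minlip (R : realType) (c a b : R) : `|Num.min a c - Num.min b c| <= `|a - b|.
Proof.
have [ha|ha] := leP a c; have [hb|hb] := leP b c;
  move: (ler_norm (a - b)) (ler_norm (b - a)); rewrite distrC ler_norml; lra.
Qed.

Lemma relu_le (R : realType) (a : R) : `|Num.max a 0| <= `|a|.
Proof. have [h|h] := leP a 0; rewrite ?normr0 ?normr_ge0 //. Qed.

Lemma mulmx_bnd (R : realType) m n (A : 'M[R]_(m,n)) (h : 'cV[R]_n) (b a : R) i :
  (forall i j, `|A i j| <= b) -> (forall j, `|h j 0| <= a) ->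
  `|(A *m h) i 0| <= n%:R * (b * a).
Proof.
move=> hA hh; rewrite mxE; apply: le_trans; first exact: ler_norm_sum.
have -> : n%:R * (b * a) = \sum_(j < n) (b * a) by rewrite sumr_const card_ord mulr_natl.
apply: ler_sum => j _; rewrite normrM; apply: ler_pM => //.
Qed.

Lemma mulmx_bnd1 (R : realType) m n (A : 'M[R]_(m,n)) (x : 'cV[R]_n) (b : R) i :
  (forall i j, `|A i j| <= b) -> `|(A *m x) i 0| <= b * norm1 x.
Proof.
move=> hA; rewrite mxE /norm1 mulr_sumr; apply: le_trans; first exact: ler_norm_sum.
apply: ler_sum => j _; rewrite normrM; apply: ler_wpM2r => //.
Qed.

Lemma reluE (R : realType) n (u : 'cV[R]_n) i : relu_v u i 0 = Num.max (u i 0) 0.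
Proof. by rewrite mxE. Qed.

Lemma layer (R : realType) n (W W' : 'M[R]_n) (v v' h h' : 'cV[R]_n) (B D a e : R) :
  (forall i j, `|W i j| <= B) -> (forall i j, `|W' i j| <= B) ->
  (forall i, `|v i 0| <= B) ->
  (forall i j, `|W i j - W' i j| <= D) -> (forall i, `|v i 0 - v' i 0| <= D) ->
  (forall j, `|h j 0| <= a) -> (forall j, `|h j 0 - h' j 0| <= e) ->
  forall i, `|relu_v (W *m h + v) i 0| <= n%:R * (B * a) + B /\
     `|relu_v (W *m h + v) i 0 - relu_v (W' *m h' + v') i 0|
        <= n%:R * (D * a) + n%:R * (B * e) + D.
Proof.
move=> hW hW' hv hdW hdv hh he i; rewrite !reluE !addE; split.
  apply: le_trans; first exact: relu_le.
  apply: le_trans; first exact: ler_normD.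
  by apply: lerD => //; apply: mulmx_bnd.
rewrite ![Num.max _ 0]maxC; apply: le_trans; first exact: maxlip.
have E : W *m h - W' *m h' = (W - W') *m h + W' *m (h - h').
  by rewrite mulmxBl mulmxBr addrA subrK.
have Ei := congr1 (fun M : 'cV[R]_n => M i 0) E; rewrite /= subE addE in Ei.
have -> : (W *m h) i 0 + v i 0 - ((W' *m h') i 0 + v' i 0)
   = ((W - W') *m h) i 0 + (W' *m (h - h')) i 0 + (v i 0 - v' i 0).
  by rewrite -Ei; ring.
apply: le_trans; first exact: ler_normD; apply: lerD => //.
apply: le_trans; first exact: ler_normD; apply: lerD; apply: mulmx_bnd => //.
- by move=> k l; rewrite subE.
- by move=> k; rewrite subE.
Qed.

Definition Inv (R : realType) n (B D m q : R) (h h' : 'cV[R]_n) :=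
  (forall j, `|h j 0| <= 2 * B * m * q) /\ (forall j, `|h j 0 - h' j 0| <= 3 * D * m * q).

Arguments Inv {R n}.
Arguments mulmx_bnd {R m n A h b a} i.
Arguments mulmx_bnd1 {R m n A} x {b} i.
Arguments subE {R m n} A B i j.

Lemma step (R : realType) n (W W' : 'M[R]_n) (v v' h h' : 'cV[R]_n) (B D m q : R) :
  1 <= (n%:R : R) -> 1 <= B -> 1 <= m -> 1 <= q -> 0 <= D ->
  (forall i j, `|W i j| <= B) -> (forall i j, `|W' i j| <= B) ->
  (forall i, `|v i 0| <= B) ->
  (forall i j, `|W i j - W' i j| <= D) -> (forall i, `|v i 0 - v' i 0| <= D) ->
  Inv B D m q h h' ->
  Inv B D m (q * (2 * n%:R * B)) (relu_v (W *m h + v)) (relu_v (W' *m h' + v')).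
Proof.
move=> n1 B1 m1 q1 D0 hW hW' hv hdW hdv [hh he].
have P1 : 1 <= n%:R * B * m * q by rewrite !mulr_ege1.
have hB : B <= B * (n%:R * B * m * q) by rewrite ler_peMr // (le_trans ler01).
have hD : D <= D * (n%:R * B * m * q) by rewrite ler_peMr.
split=> i; have [l1 l2] := @layer R n W W' v v' h h' B D _ _ hW hW' hv hdW hdv hh he i.
  apply: le_trans; first exact: l1.
  lra.
apply: le_trans; first exact: l2.
lra.
Qed.

Lemma mxsup_ge (R : realType) m n (A : 'M[R]_(m,n)) i j : `|A i j| <= mxsup A.
Proof.
rewrite /mxsup.
apply: le_trans; last exact: (le_bigmax _ (fun i => \big[Num.max/0]_(j < n) `|A i j|) i).
exact: (le_bigmax _ (fun j => `|A i j|) j).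
Qed.

Arguments mxsup_ge {R m n} A i j.

Lemma inbox_bnd (R : realType) (x B : R) : - B <= x <= B -> `|x| <= B.
Proof. by rewrite ler_norml. Qed.

Arguments inbox_bnd {R x B}.

Theorem lemma4p4 (R : realType) (p r L : nat) (B C : R)
  (th th' : nnparam R p r L) :
  (0 < p)%N -> (0 < r)%N -> (0 < L)%N ->
  1 <= B -> 1 <= C -> in_box B th -> in_box B th' ->
  forall x : 'cV[R]_p,
    `|net_f C th x - net_f C th' x|
      <= 4 * (2 * r%:R * B) ^+ L * Num.max (norm1 x) 1 * param_sup (param_sub th th').
Proof.
move=> p0 r0 L0 B1 C1 [b1 [b2 [b3 [b4 [b5 b6]]]]] [b1' [b2' [b3' [b4' [b5' b6']]]]] x.
set D := param_sup (param_sub th th').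
set m := Num.max (norm1 x) 1.
set K := 2 * r%:R * B.
have m1 : 1 <= m by rewrite le_max lexx orbT.
have nx : norm1 x <= m by rewrite le_max lexx.
have r1 : 1 <= (r%:R : R) by rewrite ler1n.
have d1 : forall i j, `|W_in th i j - W_in th' i j| <= D.
  move=> i j; rewrite -subE; apply: le_trans; first exact: (mxsup_ge (W_in (param_sub th th'))).
  by rewrite /D /param_sup !le_max lexx.
have d2 : forall i, `|v_in th i 0 - v_in th' i 0| <= D.
  move=> i; rewrite -subE; apply: le_trans; first exact: (mxsup_ge (v_in (param_sub th th'))).
  by rewrite /D /param_sup !le_max lexx ?orbT.
have d3 : forall k i j, `|W_hid th k i j - W_hid th' k i j| <= D.
  move=> k i j; rewrite -subE; apply: le_trans; first exact: (mxsup_ge (W_hid (param_sub th th') k)).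
  apply: le_trans; first exact: (le_bigmax 0 (fun k => mxsup (W_hid (param_sub th th') k)) k).
  by rewrite /D /param_sup !le_max lexx ?orbT.
have d4 : forall k i, `|v_hid th k i 0 - v_hid th' k i 0| <= D.
  move=> k i; rewrite -subE; apply: le_trans; first exact: (mxsup_ge (v_hid (param_sub th th') k)).
  apply: le_trans; first exact: (le_bigmax 0 (fun k => mxsup (v_hid (param_sub th th') k)) k).
  by rewrite /D /param_sup !le_max lexx ?orbT.
have d5 : forall i j, `|W_out th i j - W_out th' i j| <= D.
  move=> i j; rewrite -subE; apply: le_trans; first exact: (mxsup_ge (W_out (param_sub th th'))).
  by rewrite /D /param_sup !le_max lexx ?orbT.
have d6 : `|v_out th - v_out th'| <= D.
  by rewrite /D /param_sup !le_max lexx ?orbT.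
have D0 : 0 <= D by apply: le_trans d6.
have I1 : Inv B D m 1 (relu_v (W_in th *m x + v_in th)) (relu_v (W_in th' *m x + v_in th')).
  split=> i; rewrite !reluE !addE.
    apply: le_trans; first exact: relu_le.
    apply: le_trans; first exact: ler_normD.
    have := mulmx_bnd1 x i (fun i j => inbox_bnd (b1 i j)).
    have := inbox_bnd (b2 i 0).
    have : B * norm1 x <= B * m by rewrite ler_wpM2l // (le_trans ler01).
    have : B <= B * m by rewrite ler_peMr // (le_trans ler01).
    lra.
  rewrite ![Num.max _ 0]maxC; apply: le_trans; first exact: maxlip.
  have -> : (W_in th *m x) i 0 + v_in th i 0 - ((W_in th' *m x) i 0 + v_in th' i 0)
     = ((W_in th - W_in th') *m x) i 0 + (v_in th i 0 - v_in th' i 0).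
    by rewrite mulmxBl subE; ring.
  apply: le_trans; first exact: ler_normD.
  have dW1 : forall i j, `|(W_in th - W_in th') i j| <= D by move=> i' j; rewrite subE.
  have := mulmx_bnd1 x i dW1.
  have := d2 i.
  have : D * norm1 x <= D * m by rewrite ler_wpM2l.
  have : D * 1 <= D * m by rewrite ler_wpM2l.
  lra.
have Hf : forall (s : seq 'I_L.-1) (q : R) h h', 1 <= q -> Inv B D m q h h' ->
   Inv B D m (q * K ^+ size s)
     (foldl (fun h k => relu_v (W_hid th k *m h + v_hid th k)) h s)
     (foldl (fun h k => relu_v (W_hid th' k *m h + v_hid th' k)) h' s).
  elim=> [|k s IH] q h h' q1 Hi /=; first by rewrite expr0 mulr1.
  rewrite exprS mulrA; apply: IH.
    rewrite mulr_ege1 // /K !mulr_ege1 //; lra.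
  apply: step => //.
  - by move=> i j; apply: inbox_bnd.
  - by move=> i j; apply: inbox_bnd.
  - by move=> i; apply: inbox_bnd.
have [hh he] := Hf (enum 'I_L.-1) 1 _ _ (lexx _) I1.
rewrite size_enum_ord mul1r in hh he.
rewrite /net_f; apply: le_trans; first exact: maxlip.
apply: le_trans; first exact: minlip.
rewrite /net_g /=.
set hL := foldl _ _ _ in hh he *.
set hL' := foldl _ _ _ in he *.
have E : W_out th *m hL - W_out th' *m hL' = (W_out th - W_out th') *m hL + W_out th' *m (hL - hL').
  by rewrite mulmxBl mulmxBr addrA subrK.
have Ei := congr1 (fun M : 'rV[R]_1 => M 0 0) E; rewrite /= subE addE in Ei.
have -> : (W_out th *m hL) 0 0 + v_out th - ((W_out th' *m hL') 0 0 + v_out th')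
   = ((W_out th - W_out th') *m hL) 0 0 + (W_out th' *m (hL - hL')) 0 0 + (v_out th - v_out th').
  by rewrite -Ei; ring.
have dW5 : forall i j, `|(W_out th - W_out th') i j| <= D by move=> i' j; rewrite subE.
have l1 := mulmx_bnd 0 dW5 hh.
have l2 : `|(W_out th' *m (hL - hL')) 0 0| <= r%:R * (B * (3 * D * m * K ^+ L.-1)).
  apply: mulmx_bnd; first by move=> i j; apply: inbox_bnd.
  by move=> j; rewrite subE.
have KL : K ^+ L = K ^+ L.-1 * K by rewrite -exprSr prednK.
rewrite KL.
set q := K ^+ L.-1 in l1 l2 hh he *.
have q1 : 1 <= q by rewrite /q exprn_ege1 // /K !mulr_ege1 //; lra.
have P1 : 1 <= r%:R * B * m * q by rewrite !mulr_ege1.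
have hD : D <= D * (r%:R * B * m * q) by rewrite ler_peMr.
apply: le_trans; first exact: ler_normD.
have := ler_normD (((W_out th - W_out th') *m hL) 0 0) ((W_out th' *m (hL - hL')) 0 0).
rewrite /K.
lra.
Qed.
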